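(* Let $n<m$ and let $s\in\mathcal K$ have a principal $m$-block. Let $s'=sh^{\,2r_m(s)-(q_m-1)+A_m-A_n}(\mathrm{rev}(s))$. Then at least a proportion $\prod_{i=n}^{m-1}\big(1-\frac{2}{l_i-1}\big)$ of the $n$-blocks contained in the principal $m$-block of $s$ are lined up with $n$-blocks of $s'$ (i.e. occupy exactly the same interval as an occurrence of a reversed $n$-word in $s'$).
   Context: Circular coefficients $\langle k_n,l_n\rangle$ ($k_n\ge2$, $l_n\ge2$ increasing, $\sum1/l_n<\infty$), $p_0=0,q_0=1$, $q_{n+1}=k_nl_nq_n^2$, $p_{n+1}=p_nq_nk_nl_n+1$; $\mathcal C_n(w_0,\dots,w_{k_n-1})=\prod_{i=0}^{q_n-1}\prod_{j=0}^{k_n-1}(b^{q_n-j_i}w_j^{l_n-1}e^{j_i})$, $j_i\in[0,q_n)$, $j_i\equiv p_n^{-1}i\pmod{q_n}$. The circle system $\mathcal K\subseteq\{*,b,e\}^{\mathbb Z}$ has words $w_0=*$, $w_{n+1}=\mathcal C_n(w_n,\dots,w_n)$ and consists of sequences all of whose finite subwords occur in some $w_n$. $sh(x)(i)=x(i+1)$, $\mathrm{rev}(x)(k)=x(-k)$. If $s\restriction[-k,q_n-k)=w_n$ with $0\le k<q_n$ (unique by unique readability) this interval is the principal $n$-block of $s$ and $r_n(s)=k$; $n$-blocks of $s$ are the intervals where $s$ has an occurrence of $w_n$ within its parsing. $A_0=0$, $A_{n+1}=A_n-(p_n)^{-1}$, where $(p_n)^{-1}\in[0,q_n)$ is the inverse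 of $p_n$ mod $q_n$ ($(p_0)^{-1}=0$). *)

(* Defs.v *)
From HB Require Import structures.
From mathcomp Require Import all_boot all_order all_algebra.
Set Implicit Arguments. Unset Strict Implicit. Unset Printing Implicit Defensive.
Import Order.TTheory GRing.Theory Num.Theory.

Inductive sym := Star | Bsym | Esym.
Definition sym_eq_dec : forall x y : sym, {x = y} + {x <> y}.
Proof. decide equality. Defined.
HB.instance Definition _ := hasDecEq.Build sym (compareP sym_eq_dec).

Section Circular.
Variables k l : nat -> nat.

Fixpoint q (n : nat) : nat :=
  if n is n'.+1 then k n' * l n' * (q n') ^ 2 else 1.

Fixpoint p (n : nat) : nat :=
  if n is n'.+1 then p n' * q n' * k n' * l n' + 1 else 0.

(* (p_n)^{-1} : the inverse of p_n modulo q_n, taken in [0, q_n)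
   (the least x < q_n with p_n * x = 1 mod q_n; gives 0 when q_n = 1). *)
Definition pinv (n : nat) : nat :=
  nth 0 [seq x <- iota 0 (q n) | p n * x == 1 %[mod q n]] 0.

Definition jj (n i : nat) : nat := (pinv n * i) %% q n.

(* The circular operator C_n(w_0, ..., w_{k_n - 1}) =
   prod_{i < q_n} prod_{j < k_n} b^{q_n - j_i} w_j^{l_n - 1} e^{j_i}. *)
Definition Cop (n : nat) (ws : nat -> seq sym) : seq sym :=
  flatten [seq flatten [seq nseq (q n - jj n i) Bsym
                              ++ flatten (nseq (l n - 1) (ws j))
                              ++ nseq (jj n i) Esym
                        | j <- iota 0 (k n)]
          | i <- iota 0 (q n)].

Fixpoint w (n : nat) : seq sym :=
  if n is n'.+1 then Cop n' (fun _ => w n') else [:: Star].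

Fixpoint A (n : nat) : int :=
  if n is n'.+1 then (A n' - (pinv n')%:Z)%R else 0%R.

Definition window (s : int -> sym) (a : int) (len : nat) : seq sym :=
  mkseq (fun i => s (a + i%:Z)%R) len.

Definition inK (s : int -> sym) : Prop :=
  forall (a : int) (len : nat), exists n, infix (window s a len) (w n).

End Circular.

Definition sh (x : int -> sym) : int -> sym := fun i => x (i + 1)%R.
Definition shpow (t : int) (x : int -> sym) : int -> sym := fun i => x (i + t)%R.

Definition revs (x : int -> sym) : int -> sym := fun i => x (- i)%R.

(* [-r, q_n - r) is the principal n-block of s, i.e. r = r_n(s) *)
Definition principal_block (k l : nat -> nat) (s : int -> sym) (n r : nat) : Prop :=
  (r < q k l n)%N /\ window s (- r%:Z)%R (q k l n) = w k l n.

(* Main.v *)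
Require Import Defs.
From HB Require Import structures.
From mathcomp Require Import all_boot all_order all_algebra.
From mathcomp Require Import zify ring lra.
Set Implicit Arguments. Unset Strict Implicit. Unset Printing Implicit Defensive.

Module P1.

Definition isStar (x : sym) : bool := x == Star.
Definition bet (X : seq sym) := find isStar X.
Definition eps (X : seq sym) := find isStar (rev X).
Definition occ (u X : seq sym) (d : nat) : bool :=
  (d + size u <= size X) &&
  all (fun t => nth Star X (d + t) == nth Star u t) (iota 0 (size u)).
Definition runb (X : seq sym) (R : nat) : Prop :=
  forall i len, i + len <= size X ->
    (forall t, t < len -> nth Star X (i + t) != Star) -> len <= R.

Lemma occP u X d : reflect (d + size u <= size X /\
   forall t, t < size u -> nth Star X (d + t) = nth Star u t) (occ u X d).
Proof.
apply: (iffP andP) => [[h1 /allP h2]|[h1 h2]]; split => //.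
  by move=> t ht; apply/eqP/h2; rewrite mem_iota.
by apply/allP => t; rewrite mem_iota => /andP[_ ht]; rewrite h2.
Qed.

Lemma bet_star X : has isStar X -> nth Star X (bet X) = Star.
Proof. by move=> h; apply/eqP; exact: (nth_find Star h). Qed.

Lemma bet_min X p : p < bet X -> nth Star X p != Star.
Proof. by move=> h; have := before_find Star h; rewrite /isStar => ->. Qed.

Lemma bet_lt X : has isStar X -> bet X < size X.
Proof. by rewrite has_find. Qed.

Lemma bet_le X : bet X <= size X.
Proof. exact: find_size. Qed.

Lemma star_ge_bet X p : nth Star X p = Star -> bet X <= p.
Proof. move=> h; rewrite leqNgt; apply/negP => /bet_min; by rewrite h. Qed.

Lemma eps_le X : eps X <= size X.
Proof. by rewrite /eps -size_rev find_size. Qed.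

Lemma eps_min X p : size X - eps X <= p -> p < size X -> nth Star X p != Star.
Proof.
move=> h1 h2.
have h3 : size X - p.+1 < eps X by lia.
have := before_find Star h3; rewrite nth_rev; last by lia.
have -> : size X - (size X - p.+1).+1 = p by lia.
by rewrite /isStar => ->.
Qed.

Lemma star_lt_eps X p : p < size X -> nth Star X p = Star -> p + eps X < size X.
Proof.
move=> h1 h2; rewrite -subn_gt0 ltnNge; apply/negP => h.
by have := @eps_min X p; rewrite h2 eqxx => H; have : false by apply: H; lia.
Qed.

Lemma has_star_nth X p : p < size X -> nth Star X p = Star -> has isStar X.
Proof. by move=> h1 h2; apply/hasP; exists (nth Star X p); [exact: mem_nth|rewrite /isStar h2]. Qed.

Lemma eps_lt X : has isStar X -> eps X < size X.
Proof. by move=> h; rewrite /eps -(size_rev X) -has_find has_rev. Qed.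

Lemma eps_star X : has isStar X -> nth Star X (size X - (eps X).+1) = Star.
Proof.
move=> h; have h1 := eps_lt h.
have : has isStar (rev X) by rewrite has_rev.
by move/(nth_find Star); rewrite nth_rev //; move/eqP.
Qed.

Lemma occ_catl u U V d : d + size u <= size U -> occ u (U ++ V) d = occ u U d.
Proof.
move=> h; apply/occP/occP => [[h1 h2]|[h1 h2]]; split => //.
- by move=> t ht; rewrite -h2 // nth_cat; case: ifP => //; lia.
- by rewrite size_cat; lia.
- by move=> t ht; rewrite nth_cat; case: ifP => [_|]; [exact: h2|lia].
Qed.

Lemma occ_catr u U V t : occ u (U ++ V) (size U + t) = occ u V t.
Proof.
apply/occP/occP => [[h1 h2]|[h1 h2]]; split.
- by rewrite size_cat in h1; lia.
- by move=> t' ht; rewrite -h2 // nth_cat; case: ifP; [lia|move=> _; congr nth; lia].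
- by rewrite size_cat; lia.
- by move=> t' ht; rewrite nth_cat; case: ifP; [lia|move=> _; rewrite -h2 //; congr nth; lia].
Qed.

Lemma occ_cat_case u U V R d :
  has isStar u -> runb u R -> R < eps U + bet V -> bet u <= bet V -> eps u <= eps U ->
  occ u (U ++ V) d -> (d + size u <= size U) \/ (size U <= d).
Proof.
move=> hu hR hRl hb he /occP [hsz hn]; rewrite size_cat in hsz.
have hb0 := bet_lt hu; have hs0 := bet_star hu.
have hstar : nth Star (U ++ V) (d + bet u) = Star by rewrite hn.
rewrite nth_cat in hstar.
case: (ltnP (d + bet u) (size U)) => h1; rewrite ?h1 in hstar; last first.
  rewrite ltnNge h1 /= in hstar.
  have := star_ge_bet hstar; lia.
have hU := star_lt_eps h1 hstar.
have he0 := eps_lt hu; have hs1 := eps_star hu.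
set p2 := d + (size u - (eps u).+1).
have hstar2 : nth Star (U ++ V) p2 = Star by rewrite /p2 hn //; lia.
rewrite nth_cat in hstar2.
case: (ltnP p2 (size U)) => h2; rewrite ?h2 in hstar2.
  have := star_lt_eps h2 hstar2; rewrite /p2; lia.
rewrite ltnNge h2 /= in hstar2.
have hbv := star_ge_bet hstar2.
exfalso.
have : eps U + bet V <= R; last by lia.
apply: (hR (size U - eps U - d)); first by rewrite /p2 in hbv; lia.
move=> t ht.
rewrite -hn; last by rewrite /p2 in hbv; lia.
rewrite nth_cat; case: ifP => h3.
  apply: eps_min => //; lia.
apply: bet_min; lia.
Qed.

Lemma occ_bound u X d : occ u X d -> d + size u <= size X.
Proof. by case/occP. Qed.

Lemma map_constE (T U : Type) (y : U) (s : seq T) : map (fun _ => y) s = nseq (size s) y.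
Proof. by elim: s => //= a s ->. Qed.

Lemma bet_cat U V : has isStar U -> bet (U ++ V) = bet U.
Proof. by move=> h; rewrite /bet find_cat h. Qed.

Lemma eps_cat U V : has isStar V -> eps (U ++ V) = eps V.
Proof. by move=> h; rewrite /eps rev_cat find_cat has_rev h. Qed.

Lemma nseq_nostar a x : x != Star -> ~~ has isStar (nseq a x).
Proof. by move=> hx; rewrite has_nseq /isStar (negbTE hx) andbF. Qed.

Lemma bet_padl a x V : x != Star -> bet (nseq a x ++ V) = a + bet V.
Proof. by move=> hx; rewrite /bet find_cat (negbTE (nseq_nostar a hx)) size_nseq. Qed.

Lemma eps_padr c y U : y != Star -> eps (U ++ nseq c y) = c + eps U.
Proof.
move=> hy; rewrite /eps rev_cat find_cat has_rev (negbTE (nseq_nostar c hy)).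
by rewrite size_rev size_nseq.
Qed.

Lemma has_catl U V : has isStar U -> has isStar (U ++ V).
Proof. by rewrite has_cat => ->. Qed.
Lemma has_catr U V : has isStar V -> has isStar (U ++ V).
Proof. by rewrite has_cat => ->; rewrite orbT. Qed.

Lemma occ_padl u a x V d : x != Star -> has isStar u -> bet u <= bet V ->
  occ u (nseq a x ++ V) d = (a <= d) && occ u V (d - a).
Proof.
move=> hx hu hb; case: (leqP a d) => h /=.
  have -> : d = size (nseq a x) + (d - a) by rewrite size_nseq; lia.
  rewrite occ_catr; congr occ; rewrite size_nseq; lia.
apply/negP => /occP [hsz hn].
have hs := bet_star hu; have hl := bet_lt hu.
have : nth Star (nseq a x ++ V) (d + bet u) = Star by rewrite hn.
rewrite nth_cat size_nseq; case: ifP => h2.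
  by rewrite nth_nseq h2 => hh; rewrite hh eqxx in hx.
move/star_ge_bet; lia.
Qed.

Lemma occ_padr u c y U d : y != Star -> has isStar u -> eps u <= eps U ->
  occ u (U ++ nseq c y) d = occ u U d.
Proof.
move=> hy hu he; case: (leqP (d + size u) (size U)) => h; first exact: occ_catl.
have -> : occ u U d = false by apply/negP => /occ_bound; lia.
apply/negP => /occP [hsz hn].
have hs := eps_star hu; have hl := eps_lt hu.
have : nth Star (U ++ nseq c y) (d + (size u - (eps u).+1)) = Star by rewrite hn //; lia.
rewrite nth_cat; case: ifP => h2.
  move/(star_lt_eps h2); lia.
rewrite nth_nseq; case: ifP => h3 hh; first by rewrite hh eqxx in hy.
rewrite size_cat size_nseq in hsz; lia.
Qed.

Lemma runb_eps X R : runb X R -> eps X <= R.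
Proof.
move=> h; apply: (h (size X - eps X)); first by have := eps_le X; lia.
move=> t ht; apply: eps_min; have := eps_le X; lia.
Qed.

Lemma runb_bet X R : runb X R -> bet X <= R.
Proof.
move=> h; apply: (h 0); first exact: bet_le.
by move=> t ht; apply: bet_min.
Qed.

Lemma runb_cat U V R : runb U R -> runb V R -> eps U + bet V <= R -> runb (U ++ V) R.
Proof.
move=> hU hV hUV i len; rewrite size_cat => hsz hr.
case: (leqP (i + len) (size U)) => h1.
  apply: (hU i) => // t ht; have := hr t ht; rewrite nth_cat; case: ifP => //; lia.
case: (leqP (size U) i) => h2.
  apply: (hV (i - size U)); first lia.
  move=> t ht; have := hr t ht; rewrite nth_cat; case: ifP; first lia.
  by move=> _; have -> : i + t - size U = i - size U + t by lia.
have hA : size U - eps U <= i.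
  case: (boolP (has isStar U)) => hs; last by rewrite /eps hasNfind ?has_rev // size_rev; lia.
  rewrite leqNgt; apply/negP => h3.
  have := eps_lt hs => h4.
  have := hr (size U - (eps U).+1 - i); rewrite nth_cat.
  have -> : i + (size U - (eps U).+1 - i) = size U - (eps U).+1 by lia.
  rewrite ifT; last by lia.
  by rewrite eps_star // eqxx => /(_ _)/negP; apply; lia.
have hB : i + len <= size U + bet V.
  case: (boolP (has isStar V)) => hs; last by rewrite /bet hasNfind //; lia.
  rewrite leqNgt; apply/negP => h3.
  have := hr (size U + bet V - i); rewrite nth_cat.
  have -> : i + (size U + bet V - i) = size U + bet V by lia.
  rewrite ifF; last by lia.
  have -> : size U + bet V - size U = bet V by lia.
  by rewrite bet_star // eqxx => /(_ _)/negP; apply; lia.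
lia.
Qed.

Lemma runb_nseq a x R : x != Star -> a <= R -> runb (nseq a x) R.
Proof. by move=> hx ha i len; rewrite size_nseq => h _; lia. Qed.

Lemma runb_nil R : runb [::] R.
Proof. by move=> i len /= h _; lia. Qed.

Lemma flat_iotaS (f : nat -> seq sym) K :
  flatten (map f (iota 0 K.+1)) = f 0 ++ flatten (map (fun i => f i.+1) (iota 0 K)).
Proof. by rewrite /= -[1]/(1 + 0) iotaDl -map_comp. Qed.

Lemma size_flat_unif (f : nat -> seq sym) K N : (forall i, i < K -> size (f i) = N) ->
  size (flatten (map f (iota 0 K))) = K * N.
Proof.
elim: K f => [|K IH] f h //.
rewrite flat_iotaS size_cat h // IH; first by rewrite mulSn.
by move=> i hi; apply: h.
Qed.

Lemma runb_flat (f : nat -> seq sym) K R :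
  (forall i, i < K -> runb (f i) R /\ has isStar (f i)) ->
  (forall i, i.+1 < K -> eps (f i) + bet (f i.+1) <= R) ->
  runb (flatten (map f (iota 0 K))) R.
Proof.
elim: K f => [|K IH] f h1 h2; first exact: runb_nil.
rewrite flat_iotaS; apply: runb_cat.
- by case: (h1 0 isT).
- apply: IH => [i hi|i hi]; [apply: h1 | apply: h2]; lia.
case: K IH h1 h2 => [|K] IH h1 h2.
  by rewrite /= addn0; apply: runb_eps; case: (h1 0 isT).
rewrite flat_iotaS bet_cat; last by case: (h1 1 isT).
exact: h2.
Qed.

Lemma occ_flat_intro u (f : nat -> seq sym) K N s x :
  (forall i, i < K -> size (f i) = N) -> s < K -> occ u (f s) x ->
  occ u (flatten (map f (iota 0 K))) (s * N + x).
Proof.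
elim: K f s => [|K IH] f s h hs ho //.
rewrite flat_iotaS; case: s hs ho => [|s] hs ho.
  by rewrite mul0n add0n occ_catl //; have := occ_bound ho; rewrite h.
have h0 := h 0 isT.
rewrite mulSn -addnA -{1}h0 occ_catr; apply: (IH (fun i => f i.+1) s) => //.
by move=> i hi; apply: h.
Qed.

Lemma occ_flat u (f : nat -> seq sym) K N R s x :
  has isStar u -> runb u R ->
  (forall i, i < K -> [/\ size (f i) = N, has isStar (f i), bet u <= bet (f i) & eps u <= eps (f i)]) ->
  (forall i j, i < K -> j < K -> R < eps (f i) + bet (f j)) ->
  s < K -> x < N ->
  occ u (flatten (map f (iota 0 K))) (s * N + x) = occ u (f s) x.
Proof.
move=> hu hR.
elim: K f s => [|K IH] f s h hj hs hx //.
rewrite flat_iotaS.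
case: s hs => [|s] hs.
  rewrite mul0n add0n.
  case: K IH h hj hs => [|K] IH h hj hs; first by rewrite /= cats0.
  apply/idP/idP => ho; last by rewrite occ_catl //; have := occ_bound ho.
  have [hh1 hh2 hh3 hh4] := h 0 isT.
  have [hh1' hh2' hh3' hh4'] := h 1 isT.
  have := occ_cat_case hu hR _ _ _ ho.
  rewrite flat_iotaS bet_cat // hh1 => /(_ (hj 0 1 isT isT) hh3' hh4) [hb|hb]; last by lia.
  by move: ho; rewrite -flat_iotaS occ_catl // hh1.
have [hh1 _ _ _] := h 0 isT.
rewrite mulSn -addnA -{1}hh1 occ_catr; apply: (IH (fun i => f i.+1) s) => //.
- by move=> i hi; apply: h.
- by move=> i j hi hj'; apply: hj.
Qed.

Lemma occ_out u X d : size X < d + size u -> occ u X d = false.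
Proof. by move=> h; apply/negP => /occ_bound; lia. Qed.

Lemma has_flat (f : nat -> seq sym) K : 0 < K -> has isStar (f 0) ->
  has isStar (flatten (map f (iota 0 K))).
Proof. by case: K => // K _ h; rewrite flat_iotaS; apply: has_catl. Qed.

Lemma bet_flat (f : nat -> seq sym) K : 0 < K -> has isStar (f 0) ->
  bet (flatten (map f (iota 0 K))) = bet (f 0).
Proof. by case: K => // K _ h; rewrite flat_iotaS bet_cat. Qed.

Lemma eps_flat (f : nat -> seq sym) K : (forall i, i < K -> has isStar (f i)) -> 0 < K ->
  eps (flatten (map f (iota 0 K))) = eps (f K.-1).
Proof.
elim: K f => // K IH f h _; rewrite flat_iotaS.
case: K IH h => [|K] IH h; first by rewrite /= cats0.
rewrite eps_cat; last by apply: has_flat => //; apply: h.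
by rewrite (IH (fun i => f i.+1)) // => i hi; apply: h.
Qed.

Lemma runb_mono X R R' : R <= R' -> runb X R -> runb X R'.
Proof. by move=> h1 h2 i len h3 h4; exact: (leq_trans (h2 i len h3 h4) h1). Qed.

Lemma bet_nostar X : ~~ has isStar X -> bet X = size X.
Proof. by move=> h; rewrite /bet hasNfind. Qed.
Lemma eps_nostar X : ~~ has isStar X -> eps X = size X.
Proof. by move=> h; rewrite /eps hasNfind ?has_rev // size_rev. Qed.

End P1.
Import P1.

Module P2.
Import Order.TTheory GRing.Theory Num.Theory.

Lemma count_iota_shift (P : pred nat) a n :
  count P (iota a n) = count (fun x => P (a + x)) (iota 0 n).
Proof. by rewrite -[a]addn0 iotaDl count_map; apply: eq_count => x; rewrite /= addn0. Qed.

Lemma count_iota_add (P : pred nat) n1 n2 :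
  count P (iota 0 (n1 + n2)) = count P (iota 0 n1) + count (fun x => P (n1 + x)) (iota 0 n2).
Proof. by rewrite iotaD count_cat add0n (count_iota_shift P n1). Qed.

Lemma count_blocks_eq (P : pred nat) K N c :
  (forall s, s < K -> count (fun x => P (s * N + x)) (iota 0 N) = c) ->
  count P (iota 0 (K * N)) = K * c.
Proof.
elim: K => [|K IH] h //; rewrite ssrnat.mulSnr count_iota_add IH; last by move=> s hs; apply: h; lia.
by rewrite h // ssrnat.mulSnr.
Qed.

Lemma count_blocks_lb (P : pred nat) K N c :
  (forall s, s < K -> c <= count (fun x => P (s * N + x)) (iota 0 N)) ->
  K * c <= count P (iota 0 (K * N)).
Proof.
elim: K => [|K IH] h //; rewrite !ssrnat.mulSnr count_iota_add.
apply: leq_add; first by apply: IH => s hs; apply: h; lia.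
exact: h.
Qed.

Lemma count_blocks_lb_rat (P : pred nat) K N (c : rat) X :
  (forall s, s < K -> (c * X%:R <= (count (fun x => P (s * N + x)%N) (iota 0 N))%:R)%R) ->
  (c * (K * X)%N%:R <= (count P (iota 0 (K * N)%N))%:R)%R.
Proof.
elim: K => [|K IH] h; first by rewrite mul0n mulr0.
rewrite !ssrnat.mulSnr count_iota_add !natrD mulrDr.
apply: lerD; first by apply: IH => s hs; apply: h; lia.
exact: h.
Qed.

Lemma count_range_ext (P : pred nat) n M : n <= M ->
  (forall x, n <= x -> x < M -> P x = false) -> count P (iota 0 M) = count P (iota 0 n).
Proof.
move=> h1 h2; rewrite -(subnKC h1) count_iota_add -[RHS]addn0; congr (_ + _).
rewrite (eq_in_count (a2 := pred0)) ?count_pred0 //.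
move=> x; rewrite mem_iota => /andP [_ hx] /=; apply: h2; lia.
Qed.

Lemma count_range_mono (P : pred nat) n M : n <= M ->
  count P (iota 0 n) <= count P (iota 0 M).
Proof. by move=> h1; rewrite -(subnKC h1) count_iota_add leq_addr. Qed.

Lemma count_sub (P Q : pred nat) s : (forall x, x \in s -> P x -> Q x) -> count P s <= count Q s.
Proof.
elim: s => [|a s IH] h //=; apply: leq_add.
  by case: (boolP (P a)) => // hp; rewrite h // mem_head.
by apply: IH => x hx; apply: h; rewrite in_cons hx orbT.
Qed.

Lemma count_blocks_lb_range (P : pred nat) L N a0 K c : a0 + K <= L ->
  (forall s, a0 <= s -> s < a0 + K -> c <= count (fun x => P (s * N + x)) (iota 0 N)) ->
  K * c <= count P (iota 0 (L * N)).
Proof.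
move=> h1 h2.
apply: leq_trans (count_range_mono _ (leq_mul h1 (leqnn N))).
rewrite mulnDl count_iota_add; apply: leq_trans (leq_addl _ _).
apply: (count_blocks_lb (P := fun y => P (a0 * N + y))) => s hs.
rewrite (eq_count (a2 := fun x => P ((a0 + s) * N + x))); first by apply: h2; lia.
by move=> x /=; rewrite addnA mulnDl.
Qed.

Lemma count_split_pred (P Q : pred nat) s :
  count P s = count (fun x => P x && Q x) s + count (fun x => P x && ~~ Q x) s.
Proof. by elim: s => //= a s ->; case: (P a); case: (Q a) => /=; lia. Qed.

Lemma count_window (P : pred nat) lo len M : lo + len <= M ->
  count (fun y => (lo <= y) && (y < lo + len) && P y) (iota 0 M) = count P (iota lo len).
Proof.
move=> h.
have -> : M = lo + (len + (M - lo - len)) by lia.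
set F := fun y => _.
have e1 : count F (iota 0 lo) = 0.
  rewrite (eq_in_count (a2 := pred0)) ?count_pred0 //.
  by move=> x; rewrite mem_iota => hx; rewrite /F /=; apply/negbTE/negP => /andP [/andP [h1 h2] _]; lia.
have e2 : count (fun x => F (lo + (len + x))) (iota 0 (M - lo - len)) = 0.
  rewrite (eq_in_count (a2 := pred0)) ?count_pred0 //.
  by move=> x; rewrite mem_iota => hx; rewrite /F /=; apply/negbTE/negP => /andP [/andP [h1 h2] _]; lia.
rewrite count_iota_add e1 add0n count_iota_add e2 addn0 (count_iota_shift P lo); apply: eq_in_count => x.
by rewrite mem_iota => hx; rewrite /F /= leq_addr /=; have -> : lo + x < lo + len by lia.
Qed.

Lemma count_mod_window (f : nat -> bool) q lo : 0 < q ->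
  count (fun y => f (y %% q)) (iota lo q) = count f (iota 0 q).
Proof.
move=> hq; elim: lo => [|lo IH].
  by apply: eq_in_count => x; rewrite mem_iota => /andP [_ hx]; rewrite modn_small.
rewrite -IH.
have e1 : count (fun y => f (y %% q)) (iota lo (1 + q)) =
  f (lo %% q) + count (fun y => f (y %% q)) (iota lo.+1 q) by [].
have e2 : count (fun y => f (y %% q)) (iota lo (q + 1)) =
  count (fun y => f (y %% q)) (iota lo q) + f ((lo + q) %% q).
  by rewrite iotaD count_cat /= addn0.
rewrite addnC in e1; rewrite e1 in e2.
by rewrite modnDr in e2; lia.
Qed.

End P2.
Import P2.

Module P3.

Section Circ.
Variables k l : nat -> nat.
Hypothesis hk : forall i, 0 < k i.
Hypothesis hl : forall i, 1 < l i.

Local Notation Q := (q k l).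
Local Notation W := (w k l).
Local Notation PI := (pinv k l).
Local Notation J := (jj k l).

Definition chain m := flatten (map (fun _ => W m) (iota 0 (l m - 1))).
Definition seg m i := nseq (Q m - J m i) Bsym ++ chain m ++ nseq (J m i) Esym.
Definition blk m i := flatten (map (fun _ => seg m i) (iota 0 (k m))).

Lemma w_succ m : W m.+1 = flatten (map (blk m) (iota 0 (Q m))).
Proof.
rewrite /= /Cop /blk /seg /chain; congr flatten; apply: eq_map => i.
congr flatten; apply: eq_map => j; rewrite map_constE size_iota; done.
Qed.

Lemma q_pos m : 0 < Q m.
Proof. elim: m => //= m IH; rewrite !muln_gt0 hk IH; have := hl m; lia. Qed.

Lemma pinv_lt m : PI m < Q m.
Proof.
rewrite /pinv; set s := filter _ _.
case: (ltnP 0 (size s)) => h.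
  have : nth 0 s 0 \in s by apply: mem_nth.
  by rewrite mem_filter mem_iota => /andP [_ /andP [_ ]]; rewrite add0n.
by rewrite nth_default // q_pos.
Qed.

Lemma jj_lt m i : J m i < Q m.
Proof. by rewrite /jj ltn_pmod // q_pos. Qed.

Lemma jj0 m : J m 0 = 0.
Proof. by rewrite /jj muln0 mod0n. Qed.

Lemma size_chain m : size (chain m) = (l m - 1) * size (W m).
Proof. by rewrite /chain (@size_flat_unif _ _ (size (W m))). Qed.

Lemma size_w m : size (W m) = Q m.
Proof.
elim: m => // m IH.
rewrite w_succ (@size_flat_unif _ _ (k m * (l m * Q m))) /=.
  by rewrite expnS expn1; lia.
move=> i hi; rewrite /blk (@size_flat_unif _ _ (l m * Q m)) //.
move=> j hj; rewrite /seg !size_cat !size_nseq size_chain IH.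
have := jj_lt m i; have := hl m.
move: (J m i) (l m) (Q m) => a b c h1 h2.
have e : b * c = (b - 1) * c + c by rewrite -ssrnat.mulSnr; congr (_ * _); lia.
lia.
Qed.

Lemma size_seg m i : size (seg m i) = l m * Q m.
Proof.
rewrite /seg !size_cat !size_nseq size_chain size_w.
have := jj_lt m i; have := hl m.
move: (J m i) (l m) (Q m) => a b c h1 h2.
have e : b * c = (b - 1) * c + c by rewrite -ssrnat.mulSnr; congr (_ * _); lia.
lia.
Qed.

Lemma size_blk m i : size (blk m i) = k m * (l m * Q m).
Proof. by rewrite /blk (@size_flat_unif _ _ (l m * Q m)) // => j _; rewrite size_seg. Qed.

Lemma jj_mf1 m i : i.+1 < Q m -> J m i <= J m i.+1 + J m (Q m - 1).
Proof.
move=> hi; rewrite /jj.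
have -> : (PI m * i) %% Q m = ((PI m * i.+1) %% Q m + (PI m * (Q m - 1)) %% Q m) %% Q m.
  rewrite modnDm -mulnDr.
  have -> : i.+1 + (Q m - 1) = i + Q m by lia.
  by rewrite mulnDr addnC modnMDl.
exact: leq_mod.
Qed.

Lemma jj_mf2 m i : i < Q m -> (J m i + PI m + J m (Q m - 1 - i)) %% Q m = 0.
Proof.
move=> hi; rewrite /jj -addnA modnDml addnA modnDmr.
have -> : PI m * i + PI m + PI m * (Q m - 1 - i) = PI m * Q m.
  by rewrite -[X in _ + X + _]muln1 -!mulnDr; congr (_ * _); lia.
exact: modnMl.
Qed.

Lemma has_w m : has isStar (W m).
Proof.
elim: m => // m IH; rewrite w_succ; apply: has_flat; first exact: q_pos.
apply: has_flat => //; rewrite /seg; apply: has_catr; apply: has_catl.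
by apply: has_flat => //; have := hl m; lia.
Qed.

Lemma has_chain m : has isStar (chain m).
Proof. by apply: has_flat => //; [have := hl m; lia | apply: has_w]. Qed.

Lemma bet_chain m : bet (chain m) = bet (W m).
Proof. by rewrite /chain bet_flat //; [have := hl m; lia | apply: has_w]. Qed.

Lemma eps_chain m : eps (chain m) = eps (W m).
Proof. by rewrite /chain eps_flat //; [move=> *; apply: has_w | have := hl m; lia]. Qed.

Lemma has_seg m i : has isStar (seg m i).
Proof. by rewrite /seg; apply: has_catr; apply: has_catl; apply: has_chain. Qed.

Lemma bet_seg m i : bet (seg m i) = Q m - J m i + bet (W m).
Proof. by rewrite /seg bet_padl // bet_cat ?bet_chain // has_chain. Qed.

Lemma eps_seg m i : eps (seg m i) = J m i + eps (W m).
Proof.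
by rewrite /seg eps_cat ?eps_padr ?eps_chain //; apply: has_catl; apply: has_chain.
Qed.

Lemma has_blk m i : has isStar (blk m i).
Proof. by apply: has_flat => //; apply: has_seg. Qed.

Lemma bet_blk m i : bet (blk m i) = bet (seg m i).
Proof. by rewrite /blk bet_flat //; apply: has_seg. Qed.

Lemma eps_blk m i : eps (blk m i) = eps (seg m i).
Proof. by rewrite /blk eps_flat // => *; apply: has_seg. Qed.

Lemma bet_w_succ m : bet (W m.+1) = Q m + bet (W m).
Proof. by rewrite w_succ bet_flat ?q_pos ?has_blk // bet_blk bet_seg jj0 subn0. Qed.

Lemma eps_w_succ m : eps (W m.+1) = J m (Q m - 1) + eps (W m).
Proof.
rewrite w_succ eps_flat ?q_pos // ?eps_blk ?eps_seg; last by move=> *; apply: has_blk.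
by rewrite subn1.
Qed.

Lemma eps_w_lt m : eps (W m) < Q m.
Proof. by rewrite -size_w eps_lt // has_w. Qed.

Lemma bet_w_mono n m : n <= m -> bet (W n) <= bet (W m).
Proof.
elim: m => [|m IH] h; first by have -> : n = 0 by lia.
case: (ltnP n m.+1) => h2; last by have -> : n = m.+1 by lia.
rewrite bet_w_succ; have := IH (ltnSE h2); lia.
Qed.

Lemma eps_w_mono n m : n <= m -> eps (W n) <= eps (W m).
Proof.
elim: m => [|m IH] h; first by have -> : n = 0 by lia.
case: (ltnP n m.+1) => h2; last by have -> : n = m.+1 by lia.
rewrite eps_w_succ; have := IH (ltnSE h2); lia.
Qed.

Lemma be_w_lt n m : n < m -> bet (W n) + eps (W n) < bet (W m).
Proof.
move=> h; have := bet_w_mono h; rewrite bet_w_succ; have := eps_w_lt n; lia.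
Qed.

Lemma runb_w m : runb (W m) (bet (W m) + eps (W m)).
Proof.
elim: m => [|m IH].
  move=> i len /= h1 h2; case: len h1 h2 => // len h1 h2.
  by have := h2 0 isT; have -> : i = 0 by lia.
rewrite bet_w_succ eps_w_succ.
set R := Q m + _ + _.
have hq := q_pos m.
have hR : bet (W m) + eps (W m) <= R by rewrite /R; lia.
have hchain : runb (chain m) R.
  apply: runb_flat => [i hi|i hi]; last by rewrite /R; lia.
  by split; [apply: runb_mono IH | apply: has_w].
have hseg : forall i, runb (seg m i) R.
  move=> i; have := jj_lt m i => hj.
  apply: runb_cat.
  - by apply: runb_nseq => //; rewrite /R; lia.
  - apply: runb_cat => //; first by apply: runb_nseq => //; rewrite /R; lia.
    by rewrite eps_chain bet_nostar ?nseq_nostar // size_nseq /R; lia.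
  - rewrite eps_nostar ?nseq_nostar // size_nseq bet_cat ?has_chain // bet_chain.
    by rewrite /R; lia.
rewrite w_succ; apply: runb_flat => [i hi|i hi].
  split; last exact: has_blk.
  apply: runb_flat => [j hj|j hj]; first by split; [apply: hseg | apply: has_seg].
  rewrite eps_seg bet_seg /R; have := jj_lt m i; lia.
rewrite eps_blk bet_blk eps_seg bet_seg /R.
have := jj_mf1 hi; have := jj_lt m i.+1; lia.
Qed.
End Circ.

End P3.
Import P3.

Module P4.

Section Occ.
Variables k l : nat -> nat.
Hypothesis hk : forall i, 0 < k i.
Hypothesis hl : forall i, 1 < l i.
Variable n : nat.

Local Notation Q := (q k l).
Local Notation W := (w k l).
Local Notation PI := (pinv k l).
Local Notation J := (jj k l).
Local Notation wn := (W n).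
Local Notation chain := (chain k l).
Local Notation seg := (seg k l).
Local Notation blk := (blk k l).
Let q_pos := @P3.q_pos k l hk hl.
Let pinv_lt := @P3.pinv_lt k l hk hl.
Let jj_lt := @P3.jj_lt k l hk hl.
Let size_w := @P3.size_w k l hk hl.
Let size_seg := @P3.size_seg k l hk hl.
Let size_blk := @P3.size_blk k l hk hl.
Let has_w := @P3.has_w k l hk hl.
Let has_chain := @P3.has_chain k l hk hl.
Let bet_chain := @P3.bet_chain k l hk hl.
Let eps_chain := @P3.eps_chain k l hk hl.
Let has_seg := @P3.has_seg k l hk hl.
Let bet_seg := @P3.bet_seg k l hk hl.
Let eps_seg := @P3.eps_seg k l hk hl.
Let has_blk := @P3.has_blk k l hk hl.
Let bet_blk := @P3.bet_blk k l hk hl.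
Let eps_blk := @P3.eps_blk k l hk hl.
Let bet_w_succ := @P3.bet_w_succ k l hk hl.
Let eps_w_succ := @P3.eps_w_succ k l hk hl.
Let eps_w_lt := @P3.eps_w_lt k l hk hl.
Let bet_w_mono := @P3.bet_w_mono k l hk hl.
Let eps_w_mono := @P3.eps_w_mono k l hk hl.
Let be_w_lt := @P3.be_w_lt k l hk hl.
Let runb_w m : runb (W m) (bet (W m) + eps (W m)) := @P3.runb_w k l hk hl m.

Lemma occ_seg m i x : n <= m ->
  occ wn (seg m i) x = (Q m - J m i <= x) && occ wn (chain m) (x - (Q m - J m i)).
Proof.
move=> hnm; rewrite /P3.seg occ_padl //; last first.
  by rewrite bet_cat ?has_chain // bet_chain; apply: bet_w_mono.
by rewrite occ_padr // eps_chain; apply: eps_w_mono.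
Qed.

Lemma occ_W_succ m i j x : n <= m -> i < Q m -> j < k m -> x < l m * Q m ->
  occ wn (W m.+1) (i * (k m * (l m * Q m)) + (j * (l m * Q m) + x)) = occ wn (seg m i) x.
Proof.
move=> hnm hi hj hx.
have hu := has_w n; have hR : runb wn (bet wn + eps wn) := @runb_w n.
have hb := bet_w_mono hnm; have he := eps_w_mono hnm.
have c1 : forall i0, i0 < Q m -> [/\ size (blk m i0) = k m * (l m * Q m), has isStar (blk m i0),
      bet wn <= bet (blk m i0) & eps wn <= eps (blk m i0)].
  move=> i1 h1; split; [exact: size_blk | exact: has_blk | | ].
    by rewrite bet_blk bet_seg; lia.
  by rewrite eps_blk eps_seg; lia.
have c2 : forall i0 j0, i0 < Q m -> j0 < Q m -> bet wn + eps wn < eps (blk m i0) + bet (blk m j0).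
  move=> i1 i2 h1 h2; rewrite eps_blk bet_blk eps_seg bet_seg; have := jj_lt m i2; lia.
have c4 : j * (l m * Q m) + x < k m * (l m * Q m).
  have : (j.+1) * (l m * Q m) <= k m * (l m * Q m) by apply: leq_mul.
  rewrite mulSn; lia.
rewrite w_succ (occ_flat hu hR c1 c2 hi c4) /P3.blk (occ_flat hu hR) //.
- move=> i1 h1; split; [exact: size_seg | exact: has_seg | | ].
    by rewrite bet_seg; lia.
  by rewrite eps_seg; lia.
- move=> i1 i2 h1 h2; rewrite eps_seg bet_seg; have := jj_lt m i; lia.
Qed.

Lemma occ_chain_step m a r : n < m -> a < l m - 1 -> r < Q m ->
  occ wn (chain m) (a * Q m + r) = occ wn (W m) r.
Proof.
move=> hnm ha hr.
have hu := has_w n; have hR : runb wn (bet wn + eps wn) := @runb_w n.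
rewrite /P3.chain (occ_flat hu hR) //.
- move=> i hi; split; [exact: size_w | exact: has_w | | ].
    by apply: bet_w_mono; lia.
  by apply: eps_w_mono; lia.
- by move=> i1 i2 _ _; have := be_w_lt hnm; lia.
Qed.

Lemma occ_seg_intro m i c : occ wn (chain m) c -> occ wn (seg m i) (Q m - J m i + c).
Proof.
move=> h; rewrite /P3.seg.
have := occ_catr wn (nseq (Q m - J m i) Bsym) (chain m ++ nseq (J m i) Esym) c.
by rewrite size_nseq => ->; rewrite occ_catl //; apply: occ_bound.
Qed.

Lemma occ_W_intro m i j x : i < Q m -> j < k m ->
  occ wn (seg m i) x ->
  occ wn (W m.+1) (i * (k m * (l m * Q m)) + (j * (l m * Q m) + x)).
Proof.
move=> hi hj h; rewrite w_succ; apply: (occ_flat_intro (N := k m * (l m * Q m))) => //;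
  try by move=> *; apply: size_blk.
rewrite /P3.blk; apply: (occ_flat_intro (N := l m * Q m)) => //;
  try by move=> *; apply: size_seg.
Qed.

Lemma nth_flat_const (u : seq sym) L p : p < L * size u ->
  nth Star (flatten (map (fun _ => u) (iota 0 L))) p = nth Star u (p %% size u).
Proof.
elim: L p => [|L IH] p hp; first by rewrite mul0n in hp.
rewrite flat_iotaS nth_cat; case: ifP => h; first by rewrite modn_small.
rewrite IH; last by rewrite mulSn in hp; lia.
have hle : size u <= p by rewrite leqNgt h.
by congr nth; rewrite -[in RHS](subnK hle) modnDr.
Qed.

Definition rot y := all (fun t => nth Star wn ((y + t) %% Q n) == nth Star wn t) (iota 0 (Q n)).

Lemma rotP y : reflect (forall t, t < Q n -> nth Star wn ((y + t) %% Q n) = nth Star wn t) (rot y).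
Proof.
apply: (iffP allP) => h.
  by move=> t ht; apply/eqP/h; rewrite mem_iota.
by move=> t; rewrite mem_iota => /andP [_ ht]; apply/eqP/h.
Qed.

Lemma occ_chain_base y :
  occ wn (chain n) y = (y + Q n <= (l n - 1) * Q n) && rot y.
Proof.
have hsz : size (chain n) = (l n - 1) * Q n by rewrite /P3.chain (@size_flat_unif _ _ (Q n)) // => *; apply: size_w.
apply/occP/andP => [[h1 h2]|[h1 /rotP h2]]; rewrite size_w hsz in h1 *.
  split => //; apply/rotP => t ht; rewrite -(h2 t) ?size_w //.
  by rewrite /P3.chain nth_flat_const; rewrite ?size_w //; lia.
split => // t ht.
by rewrite /P3.chain nth_flat_const; rewrite ?size_w ?h2 //; lia.
Qed.

Lemma rot_modE y y' : y %% Q n = y' %% Q n -> rot y = rot y'.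
Proof.
move=> h; rewrite /rot; apply: eq_in_all => t _.
by rewrite -modnDml h modnDml.
Qed.

Lemma rot_sym x x' : rot x -> (x + x') %% Q n = 0 -> rot x'.
Proof.
move=> /rotP h hx; apply/rotP => t ht.
have hq := q_pos n.
set t' := (x' + t) %% Q n.
have ht' : t' < Q n by rewrite ltn_pmod.
rewrite -(h t' ht'); congr nth.
rewrite /t' modnDmr addnA -modnDml hx add0n modn_small //.
Qed.
End Occ.

End P4.
Import P4.

Module P5.
Import Order.TTheory GRing.Theory Num.Theory.

Lemma mul_split a b c : b < a -> (a - 1 - b) * c + b * c + c = a * c.
Proof. move=> h; have -> : a = (a - 1 - b) + b + 1 by lia. rewrite !ssrnat.mulnDl mul1n; congr (_ * _ + _ + _); lia. Qed.

Section Count.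
Variables k l : nat -> nat.
Hypothesis hk : forall i, 0 < k i.
Hypothesis hl : forall i, 1 < l i.
Variable n : nat.

Local Notation Q := (q k l).
Local Notation W := (w k l).
Local Notation PI := (pinv k l).
Local Notation J := (jj k l).
Local Notation wn := (W n).
Local Notation chain := (chain k l).
Local Notation seg := (seg k l).
Let q_pos := @P3.q_pos k l hk hl.
Let pinv_lt := @P3.pinv_lt k l hk hl.
Let jj_lt := @P3.jj_lt k l hk hl.
Let size_w := @P3.size_w k l hk hl.
Let size_seg := @P3.size_seg k l hk hl.
Let occ_seg := @P4.occ_seg k l hk hl n.
Let occ_W_succ := @P4.occ_W_succ k l hk hl n.
Let occ_W_intro := @P4.occ_W_intro k l hk hl n.
Let occ_seg_intro := @P4.occ_seg_intro k l n.

Definition O X := count (occ wn X) (iota 0 (size X)).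
Definition Lnd X C := count (fun d => occ wn X d && occ wn X (C - d)) (iota 0 (size X)).
Fixpoint dl m := if m is m'.+1 then dl m' + (if n <= m' then PI m' else 0) else 0.
Definition Cm m := Q m - Q n + dl m.
Definition LY m := (l m - 1) * Q m.
Definition Oc m := count (occ wn (chain m)) (iota 0 (LY m)).
Definition mu m y := LY m - Q n + dl m - y.
Definition good m z y := (Q m <= mu m y + z) && occ wn (chain m) (mu m y + z - Q m).
Definition G m z := count (fun y => occ wn (chain m) y && good m z y) (iota 0 (LY m)).
Definition zz m i := J m i + PI m + J m (Q m - 1 - i).

Lemma size_chain' m : size (chain m) = LY m.
Proof. by rewrite size_chain size_w. Qed.

Lemma N_eq m : l m * Q m = LY m + Q m.
Proof. by rewrite /LY -ssrnat.mulSnr; congr (_ * _); have := hl m; lia. Qed.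

Lemma seg_count_lb m i (g : pred nat) : n <= m ->
  count (fun y => occ wn (chain m) y && g (Q m - J m i + y)) (iota 0 (LY m)) <=
  count (fun x => occ wn (seg m i) x && g x) (iota 0 (l m * Q m)).
Proof.
move=> hnm; set a := Q m - J m i.
have ha : a <= l m * Q m by rewrite N_eq /a; lia.
rewrite -(subnKC ha) count_iota_add; apply: leq_trans (leq_addl _ _).
have hr : LY m <= l m * Q m - a by rewrite N_eq /a; have := jj_lt m i; lia.
apply: leq_trans (count_range_mono _ hr).
by apply: count_sub => y _ /andP [h1 h2]; rewrite occ_seg // -/a leq_addr /= addKn h1.
Qed.

Lemma seg_count_eq m i : n <= m ->
  count (occ wn (seg m i)) (iota 0 (l m * Q m)) = Oc m.
Proof.
move=> hnm; set a := Q m - J m i.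
have ha : a <= l m * Q m by rewrite N_eq /a; lia.
rewrite -(subnKC ha) count_iota_add.
rewrite (eq_in_count (a1 := occ wn (seg m i)) (a2 := pred0)); last first.
  by move=> x; rewrite mem_iota occ_seg // => /andP [_ hx] /=; apply/negbTE; rewrite negb_and -ltnNge hx.
rewrite count_pred0 add0n.
rewrite (eq_count (a2 := occ wn (chain m))); last first.
  by move=> y /=; rewrite occ_seg // -/a leq_addr /= addKn.
rewrite /Oc (count_range_ext (n := LY m)) //; first by rewrite N_eq /a; have := jj_lt m i; lia.
move=> x hx _; apply: occ_out; rewrite size_chain' size_w; have := q_pos n; lia.
Qed.

Lemma dl_succ m : n <= m -> dl m.+1 = dl m + PI m.
Proof. by move=> h /=; rewrite h. Qed.

Lemma size_W_succ m : size (W m.+1) = Q m * (k m * (l m * Q m)).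
Proof. rewrite size_w /= expnS expn1; lia. Qed.

Lemma O_succ m : n <= m -> O (W m.+1) = Q m * (k m * Oc m).
Proof.
move=> hnm; rewrite /O size_W_succ; apply: count_blocks_eq => i hi.
apply: count_blocks_eq => j hj.
rewrite -(seg_count_eq i hnm); apply: eq_in_count => x; rewrite mem_iota => /andP [_ hx].
by rewrite /= occ_W_succ.
Qed.

Lemma mirror_pt m i j y : n <= m -> i < Q m -> j < k m ->
  occ wn (chain m) y -> good m (zz m i) y ->
  occ wn (W m.+1) (Cm m.+1 - (i * (k m * (l m * Q m)) + (j * (l m * Q m) + (Q m - J m i + y)))).
Proof.
move=> hnm hi hj hy /andP [hg1 hg2].
have hy' := occ_bound hy; rewrite size_chain' size_w in hy'.
have e1 := mul_split (k m * (l m * Q m)) hi.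
have e2 := mul_split (l m * Q m) hj.
have hN := N_eq m.
have hJ1 := jj_lt m i; have hJ2 := jj_lt m (Q m - 1 - i).
have hp := pinv_lt m.
have hC : Cm m.+1 = Q m * (k m * (l m * Q m)) - Q n + dl m + PI m.
  by rewrite /Cm dl_succ // -(size_w m.+1) size_W_succ; lia.
move: hg1 hg2; rewrite /mu /zz => hg1 hg2.
have -> : Cm m.+1 - (i * (k m * (l m * Q m)) + (j * (l m * Q m) + (Q m - J m i + y))) =
   (Q m - 1 - i) * (k m * (l m * Q m)) + ((k m - 1 - j) * (l m * Q m) +
     (Q m - J m (Q m - 1 - i) + (LY m - Q n + dl m - y + (J m i + PI m + J m (Q m - 1 - i)) - Q m))).
  rewrite hC; rewrite /LY in hy' hg1 hN *.
  move: e1 e2 hN hy' hg1 hJ1 hJ2 hp.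
  move: (J m i) (J m (Q m - 1 - i)) (PI m) (dl m) (Q n) => a1 a2 p0 d0 qn.
  move: ((Q m - 1 - i) * (k m * (l m * Q m))) (i * (k m * (l m * Q m))) (Q m * (k m * (l m * Q m))) => A2 A1 A3.
  move: ((k m - 1 - j) * (l m * Q m)) (j * (l m * Q m)) (k m * (l m * Q m)) => B2 B1 KN.
  move: (l m * Q m) ((l m - 1) * Q m) => N L.
  lia.
apply: occ_W_intro; [lia | have := hk m; lia | ].
exact: occ_seg_intro.
Qed.

Lemma Lnd_succ_lb m (c : rat) : n <= m ->
  (forall i, i < Q m -> (c * (Oc m)%:R <= (G m (zz m i))%:R)%R) ->
  (c * (O (W m.+1))%:R <= (Lnd (W m.+1) (Cm m.+1))%:R)%R.
Proof.
move=> hnm h; rewrite O_succ // /Lnd size_W_succ.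
apply: count_blocks_lb_rat => i hi.
apply: count_blocks_lb_rat => j hj.
apply: (le_trans (h i hi)); rewrite ler_nat.
set g := fun x => occ wn (W m.+1)
   (Cm m.+1 - (i * (k m * (l m * Q m)) + (j * (l m * Q m) + x))).
apply: (@leq_trans (count (fun y => occ wn (chain m) y && g (Q m - J m i + y)) (iota 0 (LY m)))).
  apply: count_sub => y _ /andP [h1 h2]; rewrite h1 /=.
  exact: mirror_pt.
apply: (leq_trans (@seg_count_lb m i g hnm)).
apply: count_sub => x; rewrite mem_iota => /andP [_ hx] /andP [h1 h2].
by rewrite /= occ_W_succ // h1.
Qed.
End Count.

End P5.
Import P5.

Module P6.

Lemma mulB a b c : b <= a -> (a - b) * c + b * c = a * c.
Proof. by move=> h; rewrite -ssrnat.mulnDl subnK. Qed.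

Section Chain.
Variables k l : nat -> nat.
Hypothesis hk : forall i, 0 < k i.
Hypothesis hl : forall i, 1 < l i.
Variable n : nat.

Local Notation Q := (q k l).
Local Notation W := (w k l).
Local Notation PI := (pinv k l).
Local Notation J := (jj k l).
Local Notation wn := (W n).
Local Notation chain := (chain k l).
Let q_pos := @P3.q_pos k l hk hl.
Let pinv_lt := @P3.pinv_lt k l hk hl.
Let jj_lt := @P3.jj_lt k l hk hl.
Let size_w := @P3.size_w k l hk hl.
Let occ_chain_step := @P4.occ_chain_step k l hk hl n.
Let occ_chain_base := @P4.occ_chain_base k l hk hl n.
Let rot_modE := @P4.rot_modE k l n.
Let rot_sym := @P4.rot_sym k l hk hl n.
Local Notation rot := (P4.rot k l n).
Local Notation LY := (LY k l).
Local Notation Oc := (Oc k l n).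
Local Notation G := (G k l n).
Local Notation Lnd := (Lnd k l n).
Local Notation O := (O k l n).
Local Notation Cm := (Cm k l n).
Local Notation dl := (dl k l n).
Local Notation mu := (mu k l n).
Local Notation zz := (zz k l).

Lemma zz_cases m i : i < Q m -> zz m i = 0 \/ zz m i = Q m \/ zz m i = 2 * Q m.
Proof.
move=> hi; have h0 := @jj_mf2 k l m i hi.
have h1 := jj_lt m i; have h2 := jj_lt m (Q m - 1 - i); have h3 := pinv_lt m.
rewrite /P5.zz.
have hz : J m i + PI m + J m (Q m - 1 - i) < 3 * Q m by lia.
move: h0 hz; move: (J m i + PI m + J m (Q m - 1 - i)) => z h0 hz.
have := divn_eq z (Q m); rewrite h0 addn0 => e.
have hd : z %/ Q m < 3 by rewrite ltn_divLR // q_pos.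
move: e hd; case: (z %/ Q m) => [|[|[|d]]] e hd; lia.
Qed.

Lemma dl_le m : m <= n -> dl m = 0.
Proof. by elim: m => //= m IH h; rewrite IH ?ifF //; lia. Qed.


Lemma Oc_step m : n < m -> Oc m = (l m - 1) * O (W m).
Proof.
move=> hnm; rewrite /P5.Oc /P5.LY (@count_blocks_eq _ _ _ (O (W m))) // => s hs.
rewrite /P5.O size_w; apply: eq_in_count => x; rewrite mem_iota => /andP [_ hx].
by rewrite /= occ_chain_step.
Qed.

Lemma G_step m z : n < m -> (z = 0 \/ z = Q m \/ z = 2 * Q m) -> 2 <= l m - 1 ->
  (l m - 2) * Lnd (W m) (Cm m) <= G m z.
Proof.
move=> hnm hz hL.
rewrite /P5.G /P5.LY.
apply: (@count_blocks_lb_range _ _ _ (if z == 2 * Q m then 1 else 0) (l m - 2)).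
  by have := q_pos m; case: ifP => /eqP h; lia.
move=> s h1 h2.
rewrite /P5.Lnd size_w; apply: count_sub => r; rewrite mem_iota => /andP [_ hr] /andP [o1 o2].
have hs : s < l m - 1 by move: h2; case: ifP => /eqP ?; lia.
rewrite occ_chain_step // o1 /=.
have b1 := occ_bound o1; have b2 := occ_bound o2; rewrite !size_w in b1 b2.
have [a' [ha' ha0 e0]] : exists a', [/\ a' < l m - 1, (z = 2 * Q m -> 0 < a') & (a' + s + 2) * Q m = (l m - 1) * Q m + z].
  case: hz => [hz|[hz|hz]].
  - exists (l m - 3 - s); split; first lia.
      by move=> h; have := q_pos m; lia.
    rewrite hz addn0; congr (_ * _); move: h2; rewrite hz; have := q_pos m; case: ifP => /eqP ?; lia.
  - exists (l m - 2 - s); split; first lia.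
      by move=> h; have := q_pos m; lia.
    rewrite hz -[X in _ = _ + X]mul1n -ssrnat.mulnDl; congr (_ * _); move: h2; rewrite hz; have := q_pos m; case: ifP => /eqP ?; lia.
  - exists (l m - 1 - s); split; first by move: h1; rewrite hz eqxx; lia.
      by move: h2; rewrite hz eqxx; lia.
    rewrite hz -ssrnat.mulnDl; congr (_ * _); move: h1 h2; rewrite hz eqxx; lia.
have e : a' * Q m + s * Q m + 2 * Q m = (l m - 1) * Q m + z by rewrite -e0 !ssrnat.mulnDl.
have f1 : Q m <= a' * Q m + (2 * Q m - z).
  case: hz => [hz|[hz|hz]]; rewrite hz; try lia.
  by have := leq_pmull (Q m) (ha0 hz); lia.
rewrite /P5.good /P5.mu /P5.LY.
have -> : (l m - 1) * Q m - Q n + dl m - (s * Q m + r) + z - Q m = a' * Q m + (Cm m - r).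
  rewrite /P5.Cm in b2 *; lia.
rewrite occ_chain_step //; try (rewrite /P5.Cm in b2 *; have := q_pos n; lia).
rewrite o2 andbT; rewrite /P5.Cm in b2; lia.
Qed.

Lemma Oc_base_lb : 2 <= l n - 1 -> (l n - 2) * count rot (iota 0 (Q n)) <= Oc n.
Proof.
move=> hL; rewrite /P5.Oc /P5.LY.
apply: (@count_blocks_lb_range _ _ _ 0 (l n - 2)); first lia.
move=> s _ h2; rewrite leq_eqVlt; apply/orP; left; apply/eqP.
apply: eq_in_count => x; rewrite mem_iota => /andP [_ hx].
rewrite /= occ_chain_base.
have -> : s * Q n + x + Q n <= (l n - 1) * Q n.
  have := leq_mul (ltnW (ltnW (leqnn (s.+2)))) (leqnn (Q n)).
  have : s.+2 * Q n <= (l n - 1) * Q n by apply: leq_mul => //; lia.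
  rewrite !ssrnat.mulSnr; lia.
by rewrite /= (rot_modE (y' := x)) // modnMDl.
Qed.

Lemma G_base z : (z = 0 \/ z = Q n \/ z = 2 * Q n) -> 2 <= l n - 1 ->
  Oc n <= G n z + count rot (iota 0 (Q n)).
Proof.
move=> hz hL.
have hq := q_pos n.
have hdl : dl n = 0 by apply: dl_le.
set LQ := (l n - 1) * Q n.
have hLQ : 2 * Q n <= LQ by rewrite /LQ leq_mul2r; lia.
have hgood : forall y, occ wn (chain n) y -> Q n <= mu n y + z ->
    mu n y + z - Q n + Q n <= LQ -> P5.good k l n n z y.
  move=> y hy h1 h2; rewrite /P5.good h1 /= occ_chain_base -/LQ h2 /=.
  move: hy; rewrite occ_chain_base => /andP [hy1 hy2].
  apply: (rot_sym hy2).
  rewrite /P5.mu hdl /P5.LY -/LQ in h1 h2 *.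
  have [c [hc e]] : exists c, 2 <= l n - 1 + c /\ y + ((LQ - Q n + 0 - y) + z - Q n) = (l n - 1 + c - 2) * Q n.
    case: hz => [hz|[hz|hz]].
    - exists 0; split; first lia.
      have f := mulB (Q n) hL; rewrite addn0.
      rewrite hz /LQ in h1 h2 *; lia.
    - exists 1; split; first lia.
      have f := @mulB (l n - 1 + 1) 2 (Q n) ltac:(lia).
      have g : (l n - 1 + 1) * Q n = LQ + Q n by rewrite /LQ ssrnat.mulnDl mul1n.
      rewrite hz /LQ in h1 h2 g *; lia.
    - exists 2; split; first lia.
      have g : (l n - 1 + 2 - 2) * Q n = LQ by rewrite /LQ; congr (_ * _); lia.
      rewrite hz /LQ in h1 h2 g *; lia.
  by rewrite e modnMl.
rewrite /P5.Oc /P5.LY -/LQ (count_split_pred _ (P5.good k l n n z)) leq_add2l.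
case: hz => [hz|[hz|hz]].
- set lo := LQ - 2 * Q n + 1.
  apply: (@leq_trans (count (fun y => (lo <= y) && (y < lo + Q n) && rot y) (iota 0 LQ))).
    apply: count_sub => y _ /andP [hy hng].
    move: (hy); rewrite occ_chain_base => /andP [hy1 hy2].
    rewrite hy2 andbT; apply/andP; split; last by rewrite /lo; lia.
    rewrite leqNgt; apply/negP => hlt; move/negP: hng; apply; apply: hgood => //;
      rewrite /P5.mu hdl /P5.LY -/LQ hz /lo in hlt *; lia.
  rewrite count_window; last by rewrite /lo; lia.
  rewrite -(count_mod_window _ lo hq); apply: count_sub => y _ hy.
  by rewrite (rot_modE (y := y %% Q n) (y' := y)) // modn_mod.
- rewrite (eq_in_count (a2 := pred0)) ?count_pred0 //.
  move=> y _ /=; apply/negbTE/negP => /andP [hy hng]; move/negP: hng; apply.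
  move: (hy); rewrite occ_chain_base => /andP [hy1 hy2].
  by apply: hgood => //; rewrite /P5.mu hdl /P5.LY -/LQ hz; lia.
- apply: (@leq_trans (count (fun y => (0 <= y) && (y < 0 + Q n) && rot y) (iota 0 LQ))).
    apply: count_sub => y _ /andP [hy hng].
    move: (hy); rewrite occ_chain_base => /andP [hy1 hy2].
    rewrite hy2 andbT /=; rewrite ltnNge; apply/negP => hlt; move/negP: hng; apply; apply: hgood => //;
      rewrite /P5.mu hdl /P5.LY -/LQ hz in hlt *; lia.
  by rewrite count_window //; lia.
Qed.
End Chain.

End P6.
Import P6.

Module P7.
Import Order.TTheory GRing.Theory Num.Theory.

Section Ind.
Variables k l : nat -> nat.
Hypothesis hk : forall i, 0 < k i.
Hypothesis hl : forall i, 1 < l i.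
Variable n : nat.

Local Notation Q := (q k l).
Local Notation W := (w k l).
Local Notation Oc := (Oc k l n).
Local Notation G := (G k l n).
Local Notation Lnd := (Lnd k l n).
Local Notation O := (O k l n).
Local Notation Cm := (Cm k l n).

Definition fac i : rat := (1 - 2 / ((l i)%:R - 1))%R.

Lemma facE i : 3 <= l i -> fac i = ((l i - 3)%:R / (l i - 1)%:R)%R.
Proof.
move=> h; have hne : ((l i - 1)%:R : rat) != 0%R by rewrite pnatr_eq0; lia.
move: hne; rewrite /fac !natrB; try lia.
by move=> hne; field.
Qed.

Lemma fac_ge0 i : 3 <= l i -> (0 <= fac i)%R.
Proof. by move=> h; rewrite facE // divr_ge0. Qed.

Lemma fac_le i X Y : 3 <= l i -> (l i - 3) * X <= (l i - 1) * Y ->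
  (fac i * X%:R <= Y%:R)%R.
Proof.
move=> h1 h2; rewrite facE // mulrAC ler_pdivrMr; last by rewrite ltr0n; lia.
by rewrite -!natrM ler_nat [X in _ <= X]mulnC.
Qed.

Lemma base_case : 3 <= l n ->
  (fac n * (O (W n.+1))%:R <= (Lnd (W n.+1) (Cm n.+1))%:R)%R.
Proof.
move=> h3; apply: Lnd_succ_lb => // i hi.
apply: fac_le => //.
have hz := zz_cases hk hl hi.
have g1 := G_base hk hl hz ltac:(lia).
have g2 := Oc_base_lb hk hl (n := n) ltac:(lia).
move: g1 g2; set t := count _ _; move: (Oc n) (G n _) => o g g1 g2.
have a1 : (l n - 1) * o <= (l n - 1) * g + (l n - 1) * t by rewrite -mulnDr leq_mul2l g1 orbT.
have a3 : (l n - 1) * t <= 2 * ((l n - 2) * t) by rewrite mulnA leq_mul2r; apply/orP; right; lia.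
have a4 : (l n - 3) * o + 2 * o = (l n - 1) * o by rewrite -ssrnat.mulnDl; congr (_ * _); lia.
lia.
Qed.

Lemma step_case m (c : rat) : n < m -> 3 <= l m -> (0 <= c)%R ->
  (c * (O (W m))%:R <= (Lnd (W m) (Cm m))%:R)%R ->
  (c * fac m * (O (W m.+1))%:R <= (Lnd (W m.+1) (Cm m.+1))%:R)%R.
Proof.
move=> hnm h3 hc ih; apply: (Lnd_succ_lb hk hl (ltnW hnm)).
move=> i hi.
have hz := zz_cases hk hl hi.
have g := G_step hk hl hnm hz ltac:(lia).
rewrite (Oc_step hk hl hnm).
have e : (c * fac m * ((l m - 1) * O (W m))%:R = (l m - 3)%:R * (c * (O (W m))%:R))%R.
  have hne : ((l m - 1)%:R : rat) != 0%R by rewrite pnatr_eq0; lia.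
  by move: hne; rewrite facE // natrM => hne; field.
rewrite e; apply: (le_trans (ler_wpM2l (ler0n _ _) ih)).
rewrite -natrM ler_nat; apply: leq_trans g; apply: leq_mul => //; lia.
Qed.

Lemma main_ind m : n < m -> (forall i, n <= i -> i < m -> 3 <= l i) ->
  ((\prod_(n <= i < m) fac i) * (O (W m))%:R <= (Lnd (W m) (Cm m))%:R)%R.
Proof.
elim: m => // m IH hnm h3.
case: (ltngtP n m) => hm; last first.
- by subst m; rewrite big_nat1; apply: base_case; apply: h3.
- lia.
rewrite big_nat_recr /=; last lia.
apply: step_case => //; first by apply: h3; lia.
  by rewrite big_seq; apply: prodr_ge0 => i; rewrite mem_index_iota => hi; apply: fac_ge0; apply: h3; lia.
apply: IH => // i h1 h2; apply: h3; lia.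
Qed.

Lemma A_dl m : n <= m -> A k l m = (A k l n - (P5.dl k l n m)%:Z)%R.
Proof.
elim: m => [|m IH] h; first by move: h; rewrite leqn0 => /eqP ->; rewrite /= subr0.
case: (ltnP n m.+1) => h2; last first.
  have -> : n = m.+1 by lia.
  by rewrite dl_le // subr0.
rewrite /= IH; last lia.
rewrite (_ : n <= m = true); last by apply/idP; lia.
by rewrite PoszD opprD addrA.
Qed.
End Ind.

End P7.
Import P7.

Module P8.
Import Order.TTheory GRing.Theory Num.Theory.

Lemma q_mono (k l : nat -> nat) (hk : forall i, 0 < k i) (hl : forall i, 1 < l i) a b :
  a <= b -> q k l a <= q k l b.
Proof.
elim: b => [|b IH] h; first by have -> : a = 0 by lia.
case: (ltnP a b.+1) => h2; last by have -> : a = b.+1 by lia.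
apply: (leq_trans (IH ltac:(lia))).
have hq := P3.q_pos hk hl b; have := hk b; have := hl b.
rewrite /= expnS expn1 => h3 h4.
have : 1 <= k b * l b by rewrite muln_gt0; lia.
move: (k b * l b) => c hc.
by rewrite mulnA; apply: leq_pmull; rewrite muln_gt0 hc hq.
Qed.


End P8.
Import P8.

Import Order.TTheory GRing.Theory Num.Theory.

Theorem mainTheorem10
  (k l : nat -> nat)
  (hk : forall i, (2 <= k i)%N)
  (hl : forall i, (2 <= l i)%N)
  (hlinc : forall i, (l i < l i.+1)%N)
  (hsum : exists B : rat, forall N, (\sum_(i < N) ((l i)%:R)^-1 <= B)%R)
  (n m : nat) (hnm : (n < m)%N)
  (s : int -> sym) (hs : inK k l s)
  (rm : nat) (hprin : principal_block k l s m rm) :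
  let s' := shpow (2 * rm%:Z - ((q k l m)%:Z - 1) + A k l m - A k l n)%R (revs s) in
  let blocks := [seq d <- iota 0 (q k l m - q k l n).+1
                 | window s (- rm%:Z + d%:Z)%R (q k l n) == w k l n] in
  let lined := [seq d <- blocks
                 | window s' (- rm%:Z + d%:Z)%R (q k l n) == rev (w k l n)] in
  ((\prod_(n <= i < m) (1 - 2 / ((l i)%:R - 1)) : rat) * (size blocks)%:R
     <= (size lined)%:R)%R.
Proof.
cbv zeta.
set s' := shpow _ _.
set blocks := [seq d <- iota 0 (q k l m - q k l n).+1 | _].
set lined := [seq d <- blocks | _].
have hk' : forall i, 0 < k i by move=> i; have := hk i; lia.
have hl' : forall i, 1 < l i by move=> i; have := hl i; lia.
have hsw := P3.size_w hk' hl'.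
have hqn := P3.q_pos hk' hl' n.
have hqnm : q k l n <= q k l m by apply: q_mono => //; lia.
case: hprin => hrm hwin.
have nthm : forall i, i < q k l m -> nth Star (w k l m) i = s (- rm%:Z + i%:Z)%R.
  by move=> i hi; rewrite -hwin /window nth_mkseq.
set wn := w k l n; set wm := w k l m.
set C := P5.Cm k l n m.
have hbl : forall d, d + q k l n <= q k l m ->
    (window s (- rm%:Z + d%:Z)%R (q k l n) == wn) = occ wn wm d.
  move=> d hd; apply/eqP/occP => [h|[h1 h2]].
    split; first by rewrite /wn /wm !hsw.
    move=> t ht; rewrite /wn hsw in ht.
    rewrite nthm; last by lia.
    by rewrite -h /window nth_mkseq // PoszD addrA.
  apply: (@eq_from_nth _ Star); first by rewrite size_mkseq /wn hsw.
  move=> t; rewrite size_mkseq => ht.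
  rewrite /window nth_mkseq // -h2 ?/wn ?hsw // nthm; last by lia.
  by rewrite PoszD addrA.
have hO : size blocks = P5.O k l n wm.
  rewrite /blocks size_filter /P5.O /wm hsw.
  rewrite (@count_range_ext _ (q k l m - q k l n).+1); last first.
  - by move=> x hx _; apply: occ_out; rewrite /wn !hsw; lia.
  - lia.
  by apply: eq_in_count => d; rewrite mem_iota => /andP [_ hd]; rewrite /= hbl //; lia.
have hdl : (A k l m - A k l n = - (P5.dl k l n m)%:Z)%R.
  by rewrite (A_dl k l (n := n) (m := m)) ?(ltnW hnm) //; ring.
have hL : P5.Lnd k l n wm C <= size lined.
  rewrite /lined size_filter /blocks count_filter /P5.Lnd /wm hsw.
  rewrite (@count_range_ext _ (q k l m - q k l n).+1); last first.
  - by move=> x hx _; apply/negbTE; rewrite negb_and; apply/orP; left; apply/negP => /occ_bound; rewrite /wn !hsw; lia.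
  - lia.
  apply: count_sub => d; rewrite mem_iota => /andP [_ hd] /andP [o1 o2].
  have b1 := occ_bound o1; have b2 := occ_bound o2; rewrite /wn /wm !hsw in b1 b2.
  apply/andP; split; last by rewrite hbl //; lia.
  apply/eqP; apply: (@eq_from_nth _ Star); first by rewrite size_mkseq size_rev /wn hsw.
  move=> t; rewrite size_mkseq => ht.
  rewrite /window nth_mkseq // nth_rev; last by rewrite /wn hsw.
  move/occP: o2 => [_ h2]; rewrite -h2; last by rewrite /wn hsw; lia.
  rewrite nthm; last by rewrite /wn hsw; lia.
  rewrite /s' /shpow /revs; congr s.
  rewrite -addrA -addrA [X in (_ + (_ + X))%R]addrC addrA addrA.
  move: hdl; rewrite /C /P5.Cm /wn hsw; move: (A k l m) (A k l n) => am an hdl.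
  have : (am = an - (P5.dl k l n m)%:Z)%R by rewrite -hdl; ring.
  move=> ->; lia.
have lmono : forall i, n <= i -> l n + (i - n) <= l i.
  elim=> [|i IH] h; first by move: h; rewrite leqn0 => /eqP e; rewrite e addn0.
  case: (ltnP n i.+1) => h2; last first.
    have e : n = i.+1 by lia.
    by rewrite e subnn addn0.
  have := IH ltac:(lia); have := hlinc i; lia.
case: (leqP 3 (l n)) => h3.
  have hall : forall i, n <= i -> i < m -> 3 <= l i by move=> i h1 h2; have := lmono i h1; lia.
  have := main_ind hk' hl' hnm hall; rewrite -hO => H.
  apply: (le_trans H); rewrite ler_nat; exact: hL.
have hn2 : l n = 2 by have := hl n; lia.
rewrite big_ltn //.
have hf : (1 - 2 / ((l n)%:R - 1) = -1 :> rat)%R by rewrite hn2; field.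
rewrite hf mulN1r mulNr; apply: (le_trans (y := 0%R)); last by [].
rewrite oppr_le0; apply: mulr_ge0 => //.
rewrite big_seq; apply: prodr_ge0 => i; rewrite mem_index_iota => hi.
by apply: (fac_ge0 (l := l)); have := lmono i ltac:(lia); lia.
Qed.
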